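(* Let $\mathrm{K}$ be a semi-symmetric curvature tensor on a finite-dimensional pseudo-Euclidean vector space $(V,\langle\cdot,\cdot\rangle)$ and let $\chi$ be the minimal polynomial (over $\mathbb{R}$) of its Ricci operator $\mathrm{Ric}$. Then: (1) $\chi=\prod_i P_i$ where the $P_i$ are pairwise coprime and each $P_i$ is either irreducible or equal to $X^2$. Write $P_1,\dots,P_r$ for the factors not in $\{X,X^2\}$ (each irreducible and coprime to $X$). (2) $V$ splits as an orthogonal direct sum $V=E_0\oplus E_1\oplus\cdots\oplus E_r$, where $E_0=\ker(\mathrm{Ric}^2)$ and $E_i=\ker(P_i(\mathrm{Ric}))$ for $1\le i\le r$. (3) Each $E_i$ ($0\le i\le r$) is invariant under every $\mathrm{K}(u,v)$, $u,v\in V$. (4) For $i\neq j$, $\mathrm{K}(u,v)=0$ whenever $u\in E_i$, $v\in E_j$. (5) $\dim E_i\ge 2$ for every $1\le i\le r$. (6) $\mathfrak{h}(\mathrm{K})=\mathfrak{h}_0(\mathrm{K})+\mathfrak{h}_1(\mathrm{K})+\cdots+\mathfrak{h}_r(\mathrm{K})$, where $\mathfrak{h}_i(\mathrm{K})$ is the span of $\{\mathrm{K}(x,y): x,y\in E_i\}$, and each $\mathfrak{h}_i(\mathrm{K})$ is a Lie subalgebra.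
   Context: A curvature tensor on a pseudo-Euclidean vector space $(V,\langle\cdot,\cdot\rangle)$ is a bilinear map $\mathrm{K}:V\times V\to \mathfrak{so}(V,\langle\cdot,\cdot\rangle)$ with $\mathrm{K}(u,v)=-\mathrm{K}(v,u)$, $\mathrm{K}(u,v)w+\mathrm{K}(v,w)u+\mathrm{K}(w,u)v=0$, and $\langle \mathrm{K}(a,b)u,v\rangle=\langle \mathrm{K}(u,v)a,b\rangle$. It is semi-symmetric if $[\mathrm{K}(u,v),\mathrm{K}(a,b)]=\mathrm{K}(\mathrm{K}(u,v)a,b)+\mathrm{K}(a,\mathrm{K}(u,v)b)$ for all $u,v,a,b\in V$. $\mathfrak{h}(\mathrm{K})$ denotes the linear span of $\{\mathrm{K}(u,v):u,v\in V\}$ in $\mathfrak{so}(V)$. The Ricci operator $\mathrm{Ric}$ is the symmetric endomorphism with $\langle\mathrm{Ric}(u),v\rangle=\operatorname{trace}(a\mapsto \mathrm{K}(u,a)v)$. *)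

(* Defs.v *)
(* Endomorphisms of V are matrices acting on the RIGHT of row vectors:
   the endomorphism F sends w to w *m F.  Hence composition "F after G"
   is the matrix G *m F, and the commutator [F, G] = F o G - G o F is
   the matrix G *m F - F *m G. *)
From HB Require Import structures.
From mathcomp Require Import all_boot all_order all_algebra.
From mathcomp Require Import reals.
Set Implicit Arguments. Unset Strict Implicit. Unset Printing Implicit Defensive.
Import Order.TTheory GRing.Theory Num.Theory.
Local Open Scope ring_scope.

Section Defs.
Variables (R : realType) (n : nat).

Definition ip (G : 'M[R]_n) (u v : 'rV[R]_n) : R := (u *m G *m v^T) 0 0.

Definition pseudo_euclidean (G : 'M[R]_n) : Prop := G^T = G /\ G \in unitmx.

Definition curvature_tensor (G : 'M[R]_n) (K : 'rV[R]_n -> 'rV[R]_n -> 'M[R]_n) : Prop :=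
  [/\ ((forall (a : R) u u' v, K (a *: u + u') v = a *: K u v + K u' v) /\
       (forall (a : R) u v v', K u (a *: v + v') = a *: K u v + K u v')),
      (forall u v w z, ip G (w *m K u v) z + ip G w (z *m K u v) = 0),
      (forall u v, K u v = - K v u),
      (forall u v w, w *m K u v + u *m K v w + v *m K w u = 0) &
      (forall a b u v, ip G (u *m K a b) v = ip G (a *m K u v) b)].

Definition semi_symmetric (K : 'rV[R]_n -> 'rV[R]_n -> 'M[R]_n) : Prop :=
  forall u v a b,
    K a b *m K u v - K u v *m K a b
    = K (a *m K u v) b + K a (b *m K u v).

(* trace of the linear map a |-> K(u,a) v  (sum of diagonal entries of its
   matrix in the standard basis) *)
Definition ricci_form (K : 'rV[R]_n -> 'rV[R]_n -> 'M[R]_n) (u v : 'rV[R]_n) : R :=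
  \sum_(i < n) (v *m K u (delta_mx 0 i)) 0 i.

Definition is_ricci (G : 'M[R]_n) (K : 'rV[R]_n -> 'rV[R]_n -> 'M[R]_n) (Ric : 'M[R]_n) : Prop :=
  forall u v, ip G (u *m Ric) v = ricci_form K u v.

Definition in_span (S : 'M[R]_n -> Prop) (A : 'M[R]_n) : Prop :=
  exists (m : nat) (c : 'I_m -> R) (B : 'I_m -> 'M[R]_n),
    (forall k, S (B k)) /\ A = \sum_(k < m) c k *: B k.

(* h_P(K) = span { K(x,y) : x, y in P };  h(K) is the case P = V *)
Definition hspan (K : 'rV[R]_n -> 'rV[R]_n -> 'M[R]_n) (P : 'rV[R]_n -> Prop) : 'M[R]_n -> Prop :=
  in_span (fun B => exists x y, P x /\ P y /\ B = K x y).

(* Lie subalgebra of gl(V) (a span is automatically a linear subspace) *)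
Definition lie_closed (S : 'M[R]_n -> Prop) : Prop :=
  forall A B, S A -> S B -> S (A *m B - B *m A).

End Defs.

(* E_0 = ker(Ric^2), E_i = ker(P_i(Ric)) for 1 <= i <= r, where Ps = [P_1;...;P_r]
   (as row spaces of matrices; u \in E_i  iff  (u <= Espace Ric Ps i)%MS) *)
Definition Espace (R : realType) (n : nat) (Ric : 'M[R]_n.+1) (Ps : seq {poly R}) (i : nat)
  : 'M[R]_n.+1 :=
  if i is j.+1 then kermx (horner_mx Ric (nth 0 Ps j)) else kermx (Ric ^+ 2).

(* Main.v *)
Require Import Defs.
From HB Require Import structures.
From mathcomp Require Import all_boot all_order all_algebra.
From mathcomp Require Import reals.
From Stdlib Require Import Classical.
From mathcomp Require Import zify.
Set Implicit Arguments. Unset Strict Implicit. Unset Printing Implicit Defensive.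
Import Order.TTheory GRing.Theory Num.Theory.
Local Open Scope ring_scope.

Lemma tr_nilp (F : fieldType) (n : nat) (A : 'M[F]_n.+1) k :
  A ^+ k = 0 -> \tr A = 0.
Proof.
move=> Ak.
pose B : 'M[{poly F}]_n.+1 := map_mx polyC A.
have Bk : B ^+ k = 0.
  suff -> : B ^+ k = map_mx polyC (A ^+ k) by rewrite Ak map_mx0.
  elim: k {Ak} => [|k IH]; first by rewrite !expr0 map_mx1.
  by rewrite !exprS IH -!mulmxE map_mxM.
have cXB : GRing.comm ('X%:M : 'M[{poly F}]_n.+1) B by rewrite /GRing.comm -!mulmxE scalar_mxC.
have := subrXX_comm k cXB; rewrite Bk subr0 => hX.
have hdet : char_poly A %| 'X ^+ (k * n.+1).
  have -> : 'X ^+ (k * n.+1) = \det (('X : {poly F}) %:M ^+ k : 'M_n.+1).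
    have -> : (('X : {poly F}) %:M ^+ k : 'M_n.+1) = ('X ^+ k)%:M.
      clear; elim: k => [|k IH]; first by rewrite !expr0.
      by rewrite !exprS IH -mulmxE -scalar_mxM.
    by rewrite det_scalar -exprM.
  by rewrite hX -mulmxE det_mulmx /char_poly /char_poly_mx -/B dvdp_mulr.
have : char_poly A %| ('X - 0%:P) ^+ (k * n.+1) by rewrite subr0.
case/dvdp_exp_XsubCP => j _; rewrite subr0.
rewrite eqp_monic ?char_poly_monic ?monicXn // => /eqP cA.
have sj : j = n.+1.
  by have := size_char_poly A; rewrite cA size_polyXn => -[].
have := @char_poly_trace _ _ A isT; rewrite cA sj coefXn /= eqn_leq ltnn /= => /esym /eqP.
by rewrite andbF eqr_oppLR oppr0 => /eqP.
Qed.

Section Pol.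
Variable F : fieldType.
Implicit Types p q r m g : {poly F}.

Lemma irr_monic q : irreducible_poly q -> exists q',
  [/\ irreducible_poly q', q' \is monic & q' %= q].
Proof.
move=> [hs hq]; have q0 : q != 0 by rewrite -size_poly_gt0 (ltn_trans _ hs).
have l0 : lead_coef q != 0 by rewrite lead_coef_eq0.
have e : (lead_coef q)^-1 *: q %= q by rewrite eqp_scale ?invr_eq0.
exists ((lead_coef q)^-1 *: q); split => //.
- split; first by rewrite size_scale ?invr_eq0.
  move=> d hd hdv; rewrite (eqp_dvdr _ e) in hdv.
  by apply: eqp_trans (hq d hd hdv) _; rewrite eqp_sym.
- by apply/monicP; rewrite lead_coefZ mulVf.
Qed.

Lemma irr_factor p : (1 < size p)%N ->
  exists q, [/\ irreducible_poly q, q \is monic & q %| p].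
Proof.
have [N] := ubnP (size p); elim: N p => // N IH p; rewrite ltnS => hN hp.
have p0 : p != 0 by rewrite -size_poly_gt0 (ltn_trans _ hp).
have [[d [hd1 hdp hdn]]|hall] : (exists d : {poly F}, [/\ size d != 1, d %| p & ~~ (d %= p)]) \/
    (forall d : {poly F}, size d != 1 -> d %| p -> d %= p).
- case: (classic (exists d : {poly F}, [/\ size d != 1, d %| p & ~~ (d %= p)])) => h; first by left.
  right => d h1 h2; apply/negPn/negP => h3; apply: h; exists d; split => //.
- have d0 : d != 0 by apply/eqP => d0; move: hdp; rewrite d0 dvd0p (negPf p0).
  have hd : (1 < size d)%N.
    by rewrite ltn_neqAle eq_sym hd1 /= size_poly_gt0.
  have ltd : (size d < size p)%N.
    rewrite ltn_neqAle dvdp_leq // andbT; apply: contra hdn => /eqP.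
    by move/eqP; rewrite dvdp_size_eqp.
  have [q [h1 h2 h3]] := IH d (leq_trans ltd hN) hd.
  by exists q; split => //; apply: dvdp_trans h3 hdp.
- have [q' [h1 h2 h3]] := irr_monic (conj hp hall : irreducible_poly p).
  by exists q'; split => //; rewrite (eqp_dvdl _ h3).
Qed.

Lemma coprime_irr q p : irreducible_poly q -> ~~ (q %| p) -> coprimep q p.
Proof.
move=> hq hn; have [h|h] := irredp_XsubCP hq (dvdp_gcdl q p).
  by rewrite coprimep_def (eqp_size h) size_poly1.
by move: hn; rewrite -(eqp_dvdl _ h) dvdp_gcdr.
Qed.

Lemma mult_dec q p : (1 < size q)%N -> p != 0 ->
  exists k r, p = q ^+ k * r /\ ~~ (q %| r).
Proof.
move=> hq; have q0 : q != 0 by rewrite -size_poly_gt0 (ltn_trans _ hq).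
have [N] := ubnP (size p); elim: N p => // N IH p; rewrite ltnS => hN p0.
case: (boolP (q %| p)) => hqp; last by exists 0%N, p; rewrite expr0 mul1r.
have e := divpK hqp.
have d0 : p %/ q != 0 by apply: contraNneq p0 => h; rewrite -e h mul0r.
have hs : (size (p %/ q)%R < N)%N.
  apply: leq_trans hN; rewrite size_divp //.
  have h0 : (0 < size p)%N by rewrite size_poly_gt0.
  by rewrite ltn_subrL h0 andbT -subn1 subn_gt0.
have [k [r [hr hn]]] := IH _ hs d0.
by exists k.+1, r; split => //; rewrite -{1}e hr exprSr mulrAC.
Qed.

Lemma dvdp_prod_mem (s : seq {poly F}) p : p \in s -> p %| \prod_(x <- s) x.
Proof. by move=> hp; rewrite (big_rem _ hp) /= dvdp_mulIl. Qed.

Lemma X_irr : irreducible_poly ('X : {poly F}).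
Proof. by have := irredp_XsubC (0 : F); rewrite subr0. Qed.

Lemma factor_struct m : m \is monic ->
  (forall g k, m %| g ^+ k -> m %| 'X * g) ->
  exists s : seq {poly F}, [/\ m = \prod_(p <- s) p, all (fun p => p \is monic) s,
    pairwise (@coprimep F) s & forall p, p \in s -> irreducible_poly p \/ p = 'X^2].
Proof.
have [N] := ubnP (size m); elim: N m => // N IH m; rewrite ltnS => hN mm hP.
have m0 : m != 0 by apply: monic_neq0.
case: (leqP (size m) 1) => hsz.
  exists [::]; rewrite big_nil; split => //.
  apply/eqP; rewrite -(eqp_monic mm (monic1 F)) -size_poly_eq1 eqn_leq hsz.
  by rewrite size_poly_gt0.
have [q [qi qm qd]] := irr_factor hsz.
have hq1 : (1 < size q)%N by case: qi.
have q0 : q != 0 by apply: monic_neq0.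
have [k [r [hm hn]]] := mult_dec hq1 m0.
have r0 : r != 0 by apply: contraNneq m0 => h; rewrite hm h mulr0.
have k0 : (0 < k)%N.
  by case: k hm => // hm; move: qd; rewrite hm expr0 mul1r (negPf hn).
have rm : r \is monic by rewrite -(monicMl _ (monic_exp k qm)) -hm.
have cqr : coprimep q r by apply: coprime_irr.
have cqkr : coprimep (q ^+ k) r by apply: coprimep_expl.
have hk : k = 1%N \/ (q = 'X /\ k = 2%N).
  have : m %| (q * r) ^+ k.
    rewrite exprMn hm dvdp_mul //; case: k k0 {hm cqkr} => // k _.
    by rewrite exprS dvdp_mulIl.
  move/hP; rewrite hm mulrA dvdp_mul2r //.
  case: k k0 {hm cqkr} => // -[|k] _ h; first by left.
  right; rewrite exprS mulrC dvdp_mul2r // in h.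
  have qX : q %| 'X by apply: dvdp_trans h; rewrite exprS dvdp_mulIl.
  have [h1|h1] := irredp_XsubCP X_irr qX.
    by move: hq1; rewrite (eqp_size h1) size_poly1.
  have eq : q = 'X by apply/eqP; rewrite -eqp_monic ?monicX.
  split => //; move: h; rewrite eq -{2}['X]expr1 dvdp_Pexp2l ?size_polyX //.
  by case: k.
have hPr : forall g j, r %| g ^+ j -> r %| 'X * g.
  move=> g j hj.
  have : m %| (q * g) ^+ (j + k).
    rewrite hm exprMn Gauss_dvdp //; apply/andP; split.
      by apply: dvdp_mulr; apply: dvdp_exp2l; rewrite leq_addl.
    apply: dvdp_mull; apply: dvdp_trans hj _; apply: dvdp_exp2l.
    by rewrite leq_addr.
  move/hP; rewrite hm mulrCA => h.
  have : r %| q * ('X * g) by apply: dvdp_trans h; apply: dvdp_mulIr.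
  by rewrite Gauss_dvdpr // coprimep_sym.
have hsr : (size r < N)%N.
  apply: leq_trans hN; rewrite hm size_mul ?expf_neq0 //.
  have : (1 < size (q ^+ k))%N.
    have h2 := size_exp q k.
    have h3 : (0 < (size q).-1 * k)%N by rewrite muln_gt0 k0 andbT -subn1 subn_gt0.
    move: h2 h3; move: ((size q).-1 * k)%N (size (q ^+ k)) => a b; lia.
  have : (0 < size r)%N by rewrite size_poly_gt0.
  move: (size r) (size (q ^+ k)) => a b; lia.
have [s' [hs' ms' cs' is']] := IH r hsr rm hPr.
exists (q ^+ k :: s'); split.
- by rewrite big_cons -hs'.
- by rewrite /= monic_exp.
- rewrite pairwise_cons cs' andbT; apply/allP => p hp.
  by apply: coprimep_dvdl cqkr; rewrite hs'; apply: dvdp_prod_mem.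
- move=> p; rewrite inE => /orP [/eqP ->|/is' //].
  by case: hk => [->|[-> ->]]; [left; rewrite expr1 | right].
Qed.
End Pol.

Section Span.
Variables (R : realType) (n : nat).
Local Notation M := 'M[R]_n.
Implicit Types (S : M -> Prop).

Lemma span0 S : in_span S 0.
Proof. by exists 0%N, (fun _ => 0), (fun _ => 0); split => [[]//|]; rewrite big_ord0. Qed.

Lemma spanS S A : S A -> in_span S A.
Proof. by move=> h; exists 1%N, (fun _ => 1), (fun _ => A); rewrite big_ord1 scale1r. Qed.

Lemma spanZ S a A : in_span S A -> in_span S (a *: A).
Proof.
move=> [m [c [B [hB ->]]]]; exists m, (fun k => a * c k), B; split => //.
by rewrite scaler_sumr; apply: eq_bigr => k _; rewrite scalerA.
Qed.

Lemma spanD S A B : in_span S A -> in_span S B -> in_span S (A + B).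
Proof.
move=> [m1 [c1 [B1 [h1 ->]]]] [m2 [c2 [B2 [h2 ->]]]].
exists (m1 + m2)%N, (fun k => match split k with inl a => c1 a | inr b => c2 b end),
  (fun k => match split k with inl a => B1 a | inr b => B2 b end); split.
  by move=> k; case: (split k).
rewrite big_split_ord; congr (_ + _); apply: eq_bigr => i _.
  by rewrite (unsplitK (inl i)).
by rewrite (unsplitK (inr i)).
Qed.

Lemma span_sum S (I : Type) (r : seq I) (P : pred I) (F : I -> M) :
  (forall i, P i -> in_span S (F i)) -> in_span S (\sum_(i <- r | P i) F i).
Proof. by move=> h; apply: big_ind => //; [apply: span0 | apply: spanD]. Qed.

Lemma span_mono S S' A : (forall B, S B -> S' B) -> in_span S A -> in_span S' A.
Proof. by move=> h [m [c [B [hB ->]]]]; exists m, c, B; split => // k; apply: h. Qed.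

Lemma span_ind S (P : M -> Prop) : P 0 -> (forall A B, P A -> P B -> P (A + B)) ->
  (forall a A, P A -> P (a *: A)) -> (forall A, S A -> P A) ->
  forall A, in_span S A -> P A.
Proof.
move=> h0 hD hZ hS A [m [c [B [hB ->]]]].
by apply: big_ind => // k _; apply: hZ; apply: hS.
Qed.

Lemma lie_span S : (forall A B, S A -> S B -> in_span S (A *m B - B *m A)) ->
  forall A B, in_span S A -> in_span S B -> in_span S (A *m B - B *m A).
Proof.
move=> hS A B hA; move: B; apply: span_ind.
- by rewrite mulmx0 mul0mx subrr; apply: span0.
- move=> B1 B2 h1 h2; rewrite mulmxDr mulmxDl opprD addrACA; exact: spanD.
- by move=> a B1 h; rewrite -scalemxAr -scalemxAl -scalerBr; apply: spanZ.
move=> C hC; move: A hA; apply: span_ind.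
- by rewrite mulmx0 mul0mx subrr; apply: span0.
- move=> B1 B2 h1 h2; rewrite mulmxDr mulmxDl opprD addrACA; exact: spanD.
- by move=> a B1 h; rewrite -scalemxAr -scalemxAl -scalerBr; apply: spanZ.
by move=> A hA; apply: hS.
Qed.
End Span.

Section Geo.
Variables (R : realType) (n : nat).
Local Notation V := 'rV[R]_n.+1.
Local Notation M := 'M[R]_n.+1.
Variables (G : M) (K : V -> V -> M) (Q : M).
Hypotheses (HG : pseudo_euclidean G) (HK : curvature_tensor G K)
  (HS : semi_symmetric K) (HQ : is_ricci G K Q).

Lemma entry (A : M) (i j : 'I_n.+1) : ((delta_mx 0 i : V) *m A *m (delta_mx 0 j : V)^T) 0 0 = A i j.
Proof. by rewrite -rowE trmx_delta -colE !mxE. Qed.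

Lemma bil_eq (X Y : M) :
  (forall a b : V, (a *m X *m b^T) 0 0 = (a *m Y *m b^T) 0 0) -> X = Y.
Proof. by move=> H; apply/matrixP => i j; rewrite -[X i j]entry -[Y i j]entry H. Qed.

Lemma vec_eq (x y : V) : (forall b : V, (x *m b^T) 0 0 = (y *m b^T) 0 0) -> x = y.
Proof.
move=> H; apply/rowP => j.
by have := H (delta_mx 0 j); rewrite trmx_delta -!colE !mxE.
Qed.

Lemma oppE m k (X : 'M[R]_(m,k)) i j : (- X) i j = - X i j.
Proof. by rewrite mxE. Qed.

Lemma Gunit : G \in unitmx. Proof. by case: HG. Qed.
Lemma Gsym : G^T = G. Proof. by case: HG. Qed.

Lemma ipE u v : ip G u v = (u *m G *m v^T) 0 0. Proof. by []. Qed.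

Lemma ipC u v : ip G u v = ip G v u.
Proof.
rewrite !ipE; have -> : (u *m G *m v^T) 0 0 = ((u *m G *m v^T)^T) 0 0 by rewrite [RHS]mxE.
by rewrite !trmx_mul trmxK Gsym mulmxA.
Qed.

Lemma mul_eq (X Y : M) :
  (forall a b, ip G (a *m X) b = ip G (a *m Y) b) -> X = Y.
Proof.
move=> H; have : X *m G = Y *m G by apply: bil_eq => a b; rewrite !mulmxA; exact: H.
by move/(congr1 (mulmx^~ (invmx G))); rewrite -!mulmxA mulmxV ?Gunit // !mulmx1.
Qed.

Lemma vip_eq (x y : V) : (forall b, ip G x b = ip G y b) -> x = y.
Proof.
move=> H; have : x *m G = y *m G by apply: vec_eq => b; exact: H.
by move/(congr1 (mulmx^~ (invmx G))); rewrite -!mulmxA mulmxV ?Gunit // !mulmx1.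
Qed.

Lemma mat_ext (X Y : M) : (forall a : V, a *m X = a *m Y) -> X = Y.
Proof. by move=> H; apply/row_matrixP => i; rewrite !rowE H. Qed.

Lemma Hlin1 a u u' v : K (a *: u + u') v = a *: K u v + K u' v.
Proof. by case: HK => -[h _] _ _ _ _; apply: h. Qed.
Lemma Hlin2 a u v v' : K u (a *: v + v') = a *: K u v + K u v'.
Proof. by case: HK => -[_ h] _ _ _ _; apply: h. Qed.
Lemma Hskew u v w z : ip G (w *m K u v) z + ip G w (z *m K u v) = 0.
Proof. by case: HK. Qed.
Lemma Hanti u v : K u v = - K v u.
Proof. by case: HK. Qed.
Lemma Hbian u v w : w *m K u v + u *m K v w + v *m K w u = 0.
Proof. by case: HK. Qed.
Lemma Hpair a b u v : ip G (u *m K a b) v = ip G (a *m K u v) b.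
Proof. by case: HK. Qed.

Lemma K0r u : K u 0 = 0.
Proof.
have := Hlin2 1 u 0 0; rewrite scaler0 add0r scale1r -{1}[K u 0]add0r.
by move/addIr.
Qed.
Lemma KDr u v v' : K u (v + v') = K u v + K u v'.
Proof. by have := Hlin2 1 u v v'; rewrite !scale1r. Qed.
Lemma KZr a u v : K u (a *: v) = a *: K u v.
Proof. by rewrite -[a *: v]addr0 Hlin2 K0r addr0. Qed.
Lemma KDl u u' v : K (u + u') v = K u v + K u' v.
Proof. by rewrite Hanti KDr opprD -!Hanti. Qed.
Lemma KZl a u v : K (a *: u) v = a *: K u v.
Proof. by rewrite Hanti KZr -scalerN -Hanti. Qed.
Lemma K0l v : K 0 v = 0.
Proof. by rewrite Hanti K0r oppr0. Qed.
Lemma Kuu u : K u u = 0.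
Proof.
have h := Hanti u u; have : K u u *+ 2 = 0 by rewrite mulr2n {1}h addNr.
by move/eqP; rewrite -scaler_nat scaler_eq0 pnatr_eq0 /= => /eqP.
Qed.

Lemma Ksumr (I : Type) (r : seq I) (P : pred I) u (F : I -> V) :
  K u (\sum_(i <- r | P i) F i) = \sum_(i <- r | P i) K u (F i).
Proof. exact: (big_morph (K u) (KDr u) (K0r u)). Qed.
Lemma Ksuml (I : Type) (r : seq I) (P : pred I) v (F : I -> V) :
  K (\sum_(i <- r | P i) F i) v = \sum_(i <- r | P i) K (F i) v.
Proof. exact: (big_morph (K^~ v) (fun a b => KDl a b v) (K0l v)). Qed.

Definition Phi (x y : V) : M := \matrix_(i, j) (y *m K x (delta_mx 0 i)) 0 j.

Lemma PhiE a x y : a *m Phi x y = y *m K x a.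
Proof.
rewrite {2}(row_sum_delta a) Ksumr mulmx_sumr {1}(row_sum_delta a) mulmx_suml.
apply: eq_bigr => j _; rewrite -scalemxAl KZr -scalemxAr; congr (_ *: _).
by apply/rowP => k; rewrite -rowE !mxE.
Qed.

Lemma QE x y : ip G (x *m Q) y = \tr (Phi x y).
Proof. by rewrite (HQ x y) /ricci_form /mxtrace; apply: eq_bigr => i _; rewrite [RHS]mxE. Qed.

Lemma skew u v : K u v *m G = - (G *m (K u v)^T).
Proof.
apply: bil_eq => a b; have := Hskew u v a b.
rewrite !ipE trmx_mul mulmxN mulNmx !mulmxA oppE => /eqP.
by rewrite addr_eq0 => /eqP.
Qed.

Lemma trK u v : \tr (K u v) = 0.
Proof.
have e : K u v = - (G *m (K u v)^T *m invmx G).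
  by rewrite -mulNmx -skew -mulmxA mulmxV ?Gunit // mulmx1.
have : \tr (K u v) = - \tr (K u v).
  rewrite {1}e linearN /= -mulmxA mxtrace_mulC -mulmxA mulVmx ?Gunit //.
  by rewrite mulmx1 mxtrace_tr.
move/eqP; rewrite -subr_eq0 opprK -mulr2n -mulr_natr mulf_eq0 pnatr_eq0 orbF.
by move/eqP.
Qed.

Lemma Phi_bianchi x y : Phi x y - Phi y x + K y x = 0.
Proof.
apply: mat_ext => a; rewrite mulmx0 !mulmxDr mulmxN !PhiE.
by rewrite (Hanti y a) mulmxN opprK -(Hbian x a y) Hanti mulmxN.
Qed.

Lemma ricci_sym x y : ip G (x *m Q) y = ip G (y *m Q) x.
Proof.
rewrite !QE; have := congr1 mxtrace (Phi_bianchi x y).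
by rewrite !linearD linearN /= trK mxtrace0 addr0 => /eqP; rewrite subr_eq0 => /eqP.
Qed.

Definition symm (X : M) := X *m G = G *m X^T.

Lemma symm_ip X : symm X -> forall x y, ip G (x *m X) y = ip G x (y *m X).
Proof. by move=> hX x y; rewrite !ipE trmx_mul !mulmxA -(mulmxA x X G) hX !mulmxA. Qed.

Lemma Qsym : symm Q.
Proof.
apply: bil_eq => a b; rewrite !mulmxA -!ipE ricci_sym ipC ipE.
by rewrite trmx_mul !mulmxA.
Qed.

Lemma commKQ u v : K u v *m Q = Q *m K u v.
Proof.
set A := K u v.
have hP : forall x y, Phi (x *m A) y + Phi x (y *m A) = Phi x y *m A - A *m Phi x y.
  move=> x y; apply: mat_ext => a.
  rewrite !mulmxDr mulmxN !mulmxA !PhiE.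
  have := HS u v x a; rewrite -/A => h.
  have -> : K (x *m A) a = K x a *m A - A *m K x a - K x (a *m A).
    by rewrite h addrK.
  by rewrite !mulmxDr !mulmxN !mulmxA addrAC subrK.
apply: mul_eq => x y.
have := congr1 mxtrace (hP x y); rewrite linearD linearB /= mxtrace_mulC subrr.
rewrite -!QE => /eqP; rewrite addr_eq0 => /eqP h.
rewrite !mulmxA h ipE trmx_mul !mulmxA -[_ *m G *m _]mulmxA.
have -> : G *m A^T = - (A *m G) by rewrite skew opprK.
by rewrite mulmxN mulNmx oppE opprK !mulmxA.
Qed.

Local Notation T p := (horner_mx Q p).

Lemma commKT u v p : K u v *m T p = T p *m K u v.
Proof. exact: comm_mx_horner (commKQ u v). Qed.

Lemma Tsym p : symm (T p).
Proof.
elim/poly_ind: p => [|p c IH]; first by rewrite /symm rmorph0 mul0mx trmx0 mulmx0.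
rewrite /symm rmorphD rmorphM /= horner_mx_X horner_mx_C -mulmxE.
rewrite mulmxDl linearD /= mulmxDr -mulmxA Qsym mulmxA IH -mulmxA -trmx_mul.
have -> : Q *m T p = T p *m Q by apply: comm_mx_horner.
by rewrite tr_scalar_mx scalar_mxC.
Qed.

Lemma KT_sym p u v : K (u *m T p) v = K u (v *m T p).
Proof.
apply: mul_eq => a b.
rewrite -Hpair -mulmxA -commKT mulmxA symm_ip; last exact: Tsym.
by rewrite Hpair.
Qed.

Lemma double_eq0 (x : V) : x = - x -> x = 0.
Proof.
move=> h; have : x *+ 2 = 0 by rewrite mulr2n {1}h addNr.
by move/eqP; rewrite -scaler_nat scaler_eq0 pnatr_eq0 /= => /eqP.
Qed.

Lemma KT p u v : K (u *m T p) v = K u v *m T p.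
Proof.
pose L (x y z : V) := z *m K (x *m T p) y - z *m K x y *m T p.
have hL : forall x y z, L x y z = - L z x y.
  move=> x y z; apply/eqP; rewrite -addr_eq0; apply/eqP.
  have h1 := Hbian (x *m T p) y z.
  have h2 := congr1 (mulmx^~ (T p)) (Hbian x y z).
  rewrite mul0mx !mulmxDl -!mulmxA (commKT y z) !mulmxA in h2.
  move/eqP: h1; rewrite addrAC addr_eq0 => /eqP h1.
  move/eqP: h2; rewrite addrAC addr_eq0 => /eqP h2.
  rewrite /L (KT_sym p z x) addrACA -opprD h1 h2.
  by rewrite subrr.
apply: mat_ext => z; apply/eqP; rewrite mulmxA -subr_eq0; apply/eqP.
rewrite -/(L u v z); apply: double_eq0.
by rewrite {1}hL hL hL opprK.
Qed.

Lemma PhiT p x y : Phi (x *m T p) y = Phi x y *m T p.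
Proof. by apply: mat_ext => a; rewrite mulmxA !PhiE KT mulmxA. Qed.

Lemma PhiTC p x y : T p *m Phi x y = Phi x y *m T p.
Proof.
apply: mat_ext => a; rewrite !mulmxA !PhiE (Hanti x) KT (Hanti a x).
by rewrite mulNmx opprK mulmxA.
Qed.

Lemma QT0 g k : T g ^+ k = 0 -> T g *m Q = 0.
Proof.
move=> hk; apply: mul_eq => x y; rewrite mulmx0 mulmxA QE PhiT.
rewrite (@tr_nilp _ _ _ k); first by rewrite ipE !mul0mx mxE.
rewrite mulmxE exprMn_comm ?hk ?mulr0 //.
by rewrite /GRing.comm -!mulmxE PhiTC.
Qed.

Lemma minpoly_prop g k : mxminpoly Q %| g ^+ k -> mxminpoly Q %| 'X * g.
Proof.
move/mxminpoly_minP; rewrite rmorphXn /= => /QT0 h.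
apply: mxminpoly_min; rewrite rmorphM /= horner_mx_X -mulmxE.
have -> : Q *m T g = T g *m Q by apply: comm_mx_horner.
exact: h.
Qed.

Section Asm.
Variable s : seq {poly R}.
Hypotheses (hs_prod : mxminpoly Q = \prod_(p <- s) p)
  (hs_mon : all (fun p => p \is monic) s)
  (hs_cop : pairwise (@coprimep R) s)
  (hs_irr : forall p, p \in s -> irreducible_poly p \/ p = 'X^2).

Local Notation Ps := [seq p <- s | (p != 'X) && (p != 'X^2)].
Local Notation r := (size Ps).
Local Notation E := (Espace Q Ps).

Definition pn (i : nat) : {poly R} := if i is j.+1 then nth 0 Ps j else 'X^2.

Lemma Espace_eq i : E i = kermx (T (pn i)).
Proof. by case: i => [|i] //=; rewrite rmorphXn /= horner_mx_X. Qed.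

Lemma Ps_prop p : p \in Ps ->
  [/\ irreducible_poly p, p \is monic, p %| mxminpoly Q & coprimep p 'X^2].
Proof.
rewrite mem_filter => /andP [/andP [pX pX2] ps].
have pi : irreducible_poly p by case: (hs_irr ps) => // h; rewrite h eqxx in pX2.
have pm : p \is monic by move/allP: hs_mon => /(_ p ps).
split => //; first by rewrite hs_prod dvdp_prod_mem.
rewrite coprimep_sym; apply: coprimep_expl; apply: coprime_irr; first exact: X_irr.
apply/negP => hX; have [h|h] := irredp_XsubCP pi hX.
  by move: (eqp_size h); rewrite size_polyX size_poly1.
by move: pX; rewrite eq_sym -eqp_monic ?monicX // h.
Qed.

Lemma pn_cop i j : (i <= r)%N -> (j <= r)%N -> i != j -> coprimep (pn i) (pn j).
Proof.
have hP : pairwise (@coprimep R) Ps by apply: pairwise_filter.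
move/(pairwiseP 0): hP => hP.
case: i => [|i]; case: j => [|j] //= hi hj hij.
- by have [_ _ _] := Ps_prop (mem_nth 0 hj); rewrite coprimep_sym.
- by have [_ _ _] := Ps_prop (mem_nth 0 hi).
- case: (ltngtP i j) => h; [by apply: hP | by rewrite coprimep_sym; apply: hP |].
  by rewrite h eqxx in hij.
Qed.

Lemma prod_pn : \prod_(i < r.+1) pn i = 'X^2 * \prod_(p <- Ps) p.
Proof. by rewrite big_ord_recl /= (big_nth 0) big_mkord. Qed.

Lemma dvdp_prod_pow (t : seq {poly R}) f :
  (forall p, p \in t -> p %| f) -> \prod_(p <- t) p %| f ^+ size t.
Proof.
elim: t => [|x t IH] h; first by rewrite big_nil expr0.
rewrite big_cons /= exprS dvdp_mul ?h ?mem_head // IH // => p hp.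
by apply: h; rewrite inE hp orbT.
Qed.

Lemma minpoly_dvd : mxminpoly Q %| \prod_(i < r.+1) pn i.
Proof.
rewrite prod_pn.
have -> : 'X^2 * \prod_(p <- Ps) p = 'X * ('X * \prod_(p <- Ps) p) by rewrite mulrA.
apply: (@minpoly_prop _ (2 * size s)%N).
rewrite hs_prod exprM; apply: dvdp_prod_pow => p ps.
case: (boolP ((p != 'X) && (p != 'X^2))) => hp.
  rewrite expr2; apply: dvdp_mulr; apply: dvdp_mull.
  by apply: dvdp_prod_mem; rewrite mem_filter hp.
move: hp; rewrite negb_and !negbK => /orP [] /eqP ->; rewrite exprMn.
  by apply: dvdp_mulr; rewrite -{1}['X]expr1 dvdp_exp2l.
by apply: dvdp_mulr; apply: dvdpp.
Qed.

Lemma E_sum : (\sum_(i < r.+1) E i :=: 1%:M)%MS.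
Proof.
rewrite (eq_bigr (fun i : 'I_r.+1 => kermxpoly Q (pn i))); last first.
  by move=> i _; rewrite Espace_eq.
apply: eqmx_trans (eqmx_sym (kermxpoly_prod _ _)) _.
  by move=> i j _ _ hij; apply: pn_cop; [by rewrite -ltnS ltn_ord | by rewrite -ltnS ltn_ord | by rewrite eq_sym].
exact: kermxpoly_min minpoly_dvd.
Qed.

Lemma E_direct : mxdirect (\sum_(i < r.+1) E i).
Proof.
have := @mxdirect_sum_kermx _ _ Q _ predT (fun i : 'I_r.+1 => pn i).
have hc : {in predT &, forall i j : 'I_r.+1, j != i -> coprimep (pn i) (pn j)}.
  by move=> i j _ _ hij; apply: pn_cop; [by rewrite -ltnS ltn_ord | by rewrite -ltnS ltn_ord | by rewrite eq_sym].
move/(_ hc)/mxdirect_sumsP => h; apply/mxdirect_sumsP => i _.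
rewrite (Espace_eq i) (eq_bigr (fun j : 'I_r.+1 => kermxpoly Q (pn j))).
  exact: h i isT.
by move=> j _; rewrite Espace_eq.
Qed.

Lemma E_dec (y : V) : exists f : 'I_r.+1 -> V,
  y = \sum_(i < r.+1) f i /\ forall i : 'I_r.+1, (f i <= E i)%MS.
Proof.
have : (y <= \sum_(i < r.+1) E i)%MS by rewrite E_sum submx1.
case/sub_sumsmxP => u hu; exists (fun i => u i *m E i); split => // i.
exact: submxMl.
Qed.

Lemma E_orth i j (u v : V) : (i <= r)%N -> (j <= r)%N -> i <> j ->
  (u <= E i)%MS -> (v <= E j)%MS -> ip G u v = 0.
Proof.
move=> hi hj /eqP hij; rewrite !Espace_eq => /sub_kermxP hu /sub_kermxP hv.
have /Bezout_eq1_coprimepP [[a b] /= hab] := pn_cop hi hj hij.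
have e1 : T (a * pn i + b * pn j) = 1%:M by rewrite hab rmorph1.
have -> : u = u *m T (pn j * b).
  rewrite -{1}[u]mulmx1 -e1 rmorphD mulmxDr [a * _]mulrC [b * _]mulrC !rmorphM /=.
  by rewrite -!mulmxE mulmxA hu mul0mx add0r.
rewrite mulrC rmorphM /= -mulmxE mulmxA (symm_ip (Tsym _)) hv ipE.
by rewrite trmx0 mulmx0 mxE.
Qed.

Lemma E_inv i (u v w : V) : (w <= E i)%MS -> (w *m K u v <= E i)%MS.
Proof.
rewrite !Espace_eq => /sub_kermxP h; apply/sub_kermxP.
by rewrite -mulmxA commKT mulmxA h mul0mx.
Qed.

Lemma K_orth i j (u v : V) : (i <= r)%N -> (j <= r)%N -> i <> j ->
  (u <= E i)%MS -> (v <= E j)%MS -> K u v = 0.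
Proof.
move=> hi hj hij hu hv; apply: mul_eq => a b.
rewrite -Hpair (E_orth hi hj hij (E_inv a b hu) hv) mulmx0 ipE !mul0mx.
by rewrite mxE.
Qed.

Lemma K_row i (u : V) : (i <= r)%N -> (u <= E i)%MS ->
  (forall v, (v <= E i)%MS -> K u v = 0) -> forall y, K u y = 0.
Proof.
move=> hi hu h y; have [f [-> hf]] := E_dec y; rewrite Ksumr big1 // => j _.
case: (eqVneq (j : nat) i) => [ej|nj]; first by apply: h; rewrite -ej hf.
apply: (K_orth hi _ _ hu (hf j)); first by rewrite -ltnS ltn_ord.
by move=> e; rewrite e eqxx in nj.
Qed.

Lemma E_rank i : (1 <= i <= r)%N -> (2 <= \rank (E i))%N.
Proof.
move=> /andP [i1 ir].
have hp : pn i \in Ps by case: i i1 ir => // i _ ir; exact: mem_nth.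
have [pirr pmon pdvd pcop] := Ps_prop hp.
have hp1 : (1 < size (pn i))%N by case: pirr.
have E0 : E i != 0.
  rewrite Espace_eq kermx_eq0 row_free_unit; apply/negP => hu.
  have m0 : mxminpoly Q != 0 by apply: monic_neq0 (mxminpoly_monic Q).
  have e := divpK pdvd.
  have q0 : mxminpoly Q %/ pn i != 0 by apply: contraNneq m0 => h; rewrite -e h mul0r.
  have : horner_mx Q (mxminpoly Q %/ pn i) = 0.
    have := mx_root_minpoly Q; rewrite -{1}e rmorphM /= -mulmxE => h.
    have := congr1 (mulmx^~ (invmx (T (pn i)))) h.
    by rewrite -mulmxA mulmxV // mulmx1 mul0mx.
  move/mxminpoly_min/(dvdp_leq q0); rewrite size_divp ?monic_neq0 //.
  have : (0 < size (mxminpoly Q))%N by rewrite size_poly_gt0.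
  move: (size (mxminpoly Q)) (size (pn i)) hp1 => a b; lia.
have r1 : \rank (E i) != 1%N.
  apply/negP => /eqP r1.
  set u := nz_row (E i).
  have u0 : u != 0 by rewrite nz_row_eq0.
  have uE : (u <= E i)%MS by exact: nz_row_sub.
  have ru : \rank u = 1%N.
    apply/eqP; rewrite eqn_leq rank_leq_row lt0n mxrank_eq0 u0.
    done.
  have Eu : (E i <= u)%MS.
    have := mxrank_leqif_sup uE; rewrite r1 ru => h.
    by rewrite -(h.2) eqxx.
  have Kuv : forall v, (v <= E i)%MS -> K u v = 0.
    move=> v hv; have /submxP [D ->] := submx_trans hv Eu.
    by rewrite [D]mx11_scalar mul_scalar_mx KZr Kuu scaler0.
  have Ky := K_row ir uE Kuv.
  have uQ : u *m Q = 0.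
    apply: vip_eq => b; rewrite QE.
    have -> : Phi u b = 0 by apply: mat_ext => a; rewrite PhiE Ky !mulmx0.
    by rewrite mxtrace0 ipE !mul0mx mxE.
  have hu : u *m T (pn i) = 0 by apply/sub_kermxP; rewrite -Espace_eq.
  have cX : coprimep (pn i) 'X.
    by apply: coprimep_dvdl pcop; rewrite expr2 dvdp_mulIl.
  have /Bezout_eq1_coprimepP [[a b] /= hab] := cX.
  have e1 : T (a * pn i + b * 'X) = 1%:M by rewrite hab rmorph1.
  move/eqP: u0; apply.
  rewrite -[u]mulmx1 -e1 rmorphD mulmxDr [a * _]mulrC [b * _]mulrC !rmorphM /=.
  by rewrite horner_mx_X -!mulmxE !mulmxA hu uQ !mul0mx addr0.
move: E0 r1; rewrite -mxrank_eq0; move: (\rank (E i)) => k; lia.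
Qed.

Lemma hspan_dec A : hspan K (fun _ => True) A ->
  exists B : 'I_r.+1 -> M,
    (forall i : 'I_r.+1, hspan K (fun x => (x <= E i)%MS) (B i)) /\
    A = \sum_(i < r.+1) B i.
Proof.
case=> m [c [B [hB ->]]].
have hex : forall k, exists xy : V * V, B k = K xy.1 xy.2.
  by move=> k; have [x [y [_ [_ ->]]]] := hB k; exists (x, y).
have [XY hXY] := fin_all_exists hex.
have [fx hfx] := fin_all_exists (fun k => E_dec (XY k).1).
have [fy hfy] := fin_all_exists (fun k => E_dec (XY k).2).
exists (fun i => \sum_(k < m) c k *: K (fx k i) (fy k i)); split.
  move=> i; exists m, c, (fun k => K (fx k i) (fy k i)); split => // k.
  by exists (fx k i), (fy k i); split; [case: (hfx k) | split; [case: (hfy k)|]].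
rewrite exchange_big /=; apply: eq_bigr => k _; rewrite -scaler_sumr hXY.
congr (_ *: _).
have [ex hx] := hfx k; have [ey hy] := hfy k.
rewrite {1}ex {1}ey Ksuml; apply: eq_bigr => i _; rewrite Ksumr (bigD1 i) //=.
rewrite big1 ?addr0 // => j hj.
apply: (K_orth _ _ _ (hx i) (hy j)); [by rewrite -ltnS ltn_ord | by rewrite -ltnS ltn_ord |].
by move=> e; move: hj; rewrite eq_sym -val_eqE /= e eqxx.
Qed.

Lemma hspan_lie i : (i <= r)%N -> lie_closed (hspan K (fun x => (x <= E i)%MS)).
Proof.
move=> hi; apply: lie_span => X Y [x [y [hx [hy ->]]]] [a [b [ha [hb ->]]]].
rewrite HS; apply: spanD; apply: spanS.
  by exists (x *m K a b), y; split => //; apply: E_inv.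
by exists x, (y *m K a b); split => //; split => //; apply: E_inv.
Qed.
End Asm.

Lemma main_aux : exists s : seq {poly R},
    [/\ mxminpoly Q = \prod_(p <- s) p,
        all (fun p => p \is monic) s,
        (forall i j, (i < size s)%N -> (j < size s)%N -> i <> j ->
           coprimep (nth 0 s i) (nth 0 s j)) &
        (forall p, p \in s -> irreducible_poly p \/ p = 'X^2)] /\
    let Ps := [seq p <- s | (p != 'X) && (p != 'X^2)] in
    let r := size Ps in
    let E := Espace Q Ps in
    [/\ (\sum_(i < r.+1) E i :=: 1%:M)%MS /\ mxdirect (\sum_(i < r.+1) E i)
        /\ (forall (i j : nat) (u v : 'rV[R]_n.+1), (i <= r)%N -> (j <= r)%N -> i <> j ->
              (u <= E i)%MS -> (v <= E j)%MS -> ip G u v = 0),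
        (forall (i : nat) (u v w : 'rV[R]_n.+1), (i <= r)%N ->
           (w <= E i)%MS -> (w *m K u v <= E i)%MS),
        (forall (i j : nat) (u v : 'rV[R]_n.+1), (i <= r)%N -> (j <= r)%N -> i <> j ->
           (u <= E i)%MS -> (v <= E j)%MS -> K u v = 0),
        (forall i : nat, (1 <= i <= r)%N -> (2 <= \rank (E i))%N) &
        (forall A : 'M[R]_n.+1,
           hspan K (fun _ => True) A <->
           exists B : 'I_r.+1 -> 'M[R]_n.+1,
             (forall i : 'I_r.+1, hspan K (fun x => (x <= E i)%MS) (B i)) /\
             A = \sum_(i < r.+1) B i)
        /\ (forall i : nat, (i <= r)%N -> lie_closed (hspan K (fun x => (x <= E i)%MS)))].
Proof.
have [s [hp hm hc hi]] := factor_struct (mxminpoly_monic Q) minpoly_prop.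
exists s; split.
  split => // i j hi' hj hij.
  move/(pairwiseP 0): (hc) => hc'.
  case: (ltngtP i j) => h; [by apply: hc' | by rewrite coprimep_sym; apply: hc' |].
  by rewrite h in hij.
cbv zeta.
split.
- split; first by apply: E_sum.
  split; first by apply: E_direct.
  by move=> i j u v hi' hj hij hu hv; apply: E_orth hu hv.
- by move=> i u v w hi' hw; apply: E_inv.
- by move=> i j u v hi' hj hij hu hv; apply: K_orth hu hv.
- by move=> i hi'; apply: E_rank.
split.
  move=> A; split; first by apply: hspan_dec.
  move=> [B [hB ->]]; apply: span_sum => i _.
  by apply: span_mono (hB i) => X [x [y [_ [_ ->]]]]; exists x, y.
by move=> i hi'; apply: hspan_lie.
Qed.

End Geo.

Unset Implicit Arguments.

Theorem mainTheorem2 (R : realType) (n : nat) (G : 'M[R]_n.+1)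
  (K : 'rV[R]_n.+1 -> 'rV[R]_n.+1 -> 'M[R]_n.+1) (Ric : 'M[R]_n.+1) :
  pseudo_euclidean G -> curvature_tensor G K -> semi_symmetric K ->
  is_ricci G K Ric ->
  exists s : seq {poly R},
    (* (1) *)
    [/\ mxminpoly Ric = \prod_(p <- s) p,
        all (fun p => p \is monic) s,
        (forall i j, (i < size s)%N -> (j < size s)%N -> i <> j ->
           coprimep (nth 0 s i) (nth 0 s j)) &
        (forall p, p \in s -> irreducible_poly p \/ p = 'X^2)] /\
    let Ps := [seq p <- s | (p != 'X) && (p != 'X^2)] in
    let r := size Ps in
    let E := Espace Ric Ps in
    [/\ (* (2) orthogonal direct sum *)
        (\sum_(i < r.+1) E i :=: 1%:M)%MS /\ mxdirect (\sum_(i < r.+1) E i)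
        /\ (forall (i j : nat) (u v : 'rV[R]_n.+1), (i <= r)%N -> (j <= r)%N -> i <> j ->
              (u <= E i)%MS -> (v <= E j)%MS -> ip G u v = 0),
        (* (3) *)
        (forall (i : nat) (u v w : 'rV[R]_n.+1), (i <= r)%N ->
           (w <= E i)%MS -> (w *m K u v <= E i)%MS),
        (* (4) *)
        (forall (i j : nat) (u v : 'rV[R]_n.+1), (i <= r)%N -> (j <= r)%N -> i <> j ->
           (u <= E i)%MS -> (v <= E j)%MS -> K u v = 0),
        (* (5) *)
        (forall i : nat, (1 <= i <= r)%N -> (2 <= \rank (E i))%N) &
        (* (6) *)
        (forall A : 'M[R]_n.+1,
           hspan K (fun _ => True) A <->
           exists B : 'I_r.+1 -> 'M[R]_n.+1,
             (forall i : 'I_r.+1, hspan K (fun x => (x <= E i)%MS) (B i)) /\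
             A = \sum_(i < r.+1) B i)
        /\ (forall i : nat, (i <= r)%N -> lie_closed (hspan K (fun x => (x <= E i)%MS)))].
Proof.
move=> HG HK HS HQ; exact: (main_aux HG HK HS HQ).
Qed.
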